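(* Let $(!, \delta, \varepsilon, \Delta, \mathsf{e}, \mathsf{m},\mathsf{m}_K)$ be a monoidal coalgebra modality on an additive symmetric monoidal category $(\mathbb{X}, \otimes, K)$. Then there exists a natural transformation $\mathsf{S}_A: !(A) \to !(A)$ such that for each object $A$, $(!(A), \nabla_A, \mathsf{u}_A, \Delta_A, \mathsf{e}_A, \mathsf{S}_A)$ is a cocommutative Hopf monoid if and only if $(\mathbb{X}, \otimes, K)$ is enriched over abelian groups (i.e. has negatives: every map $f$ has an additive inverse $-f$ with $f+(-f)=0$).
   Context: Composition is in diagrammatic order; $\ell,\rho$ are the unitors. An additive symmetric monoidal category is a symmetric monoidal category whose hom-sets are commutative monoids ($+$, $0$), with composition and $\otimes$ preserving sums and zeros in each argument. A monoidal coalgebra modality is a symmetric monoidal comonad $(!,\delta,\varepsilon,\mathsf{m},\mathsf{m}_K)$ ($\mathsf{m}_{A,B}:!(A)\otimes!(B)\to!(A\otimes B)$, $\mathsf{m}_K:K\to!(K)$) with natural cocommutative comonoids $(!(A),\Delta_A,\mathsf{e}_A)$ such that $\delta_A$ is a comonoid morphism and $\Delta,\mathsf{e}$ are monoidal transformations and $!$-coalgebra morphisms. Here $\nabla_A := (\delta_A\otimes\delta_A);\mathsf{m}_{!(A),!(A)};!\big(((\varepsilon_A\otimes\mathsf{e}_A);\rho_A)+((\mathsf{e}_A\otimes\varepsilon_A);\ell_A)\big)$ and $\mathsf{u}_A:=\mathsf{m}_K;!(0_{K,A})$, which make $(!(A),\nabla_A,\mathsf{u}_A,\Delta_A,\mathsf{e}_A)$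 a commutative and cocommutative bimonoid. A Hopf monoid is a bimonoid with antipode $\mathsf{S}$ satisfying $\Delta;(1\otimes\mathsf{S});\nabla=\mathsf{e};\mathsf{u}=\Delta;(\mathsf{S}\otimes1);\nabla$. *)

(* Defs.v *)
(* Plain Rocq world: no category-theory library is installed, so the
   notions of the paper are defined here from scratch.
   Composition is written in diagrammatic order: f ;; g = "first f, then g". *)

Set Implicit Arguments.
Unset Strict Implicit.

Record SMCData := {
  ob : Type;
  hom : ob -> ob -> Type;
  idm : forall A, hom A A;
  comp : forall A B C, hom A B -> hom B C -> hom A C;
  tob : ob -> ob -> ob;
  tm : forall A B C D, hom A B -> hom C D -> hom (tob A C) (tob B D);
  unt : ob;
  asc : forall A B C, hom (tob (tob A B) C) (tob A (tob B C));
  asci : forall A B C, hom (tob A (tob B C)) (tob (tob A B) C);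
  lu : forall A, hom (tob unt A) A;
  lui : forall A, hom A (tob unt A);
  ru : forall A, hom (tob A unt) A;
  rui : forall A, hom A (tob A unt);
  sym : forall A B, hom (tob A B) (tob B A);
  hplus : forall A B, hom A B -> hom A B -> hom A B;
  hzero : forall A B, hom A B
}.

Arguments hom {s} _ _.
Arguments idm {s} A.
Arguments comp {s A B C} _ _.
Arguments tob {s} _ _.
Arguments tm {s A B C D} _ _.
Arguments unt {s}.
Arguments asc {s} A B C.
Arguments asci {s} A B C.
Arguments lu {s} A.
Arguments lui {s} A.
Arguments ru {s} A.
Arguments rui {s} A.
Arguments sym {s} A B.
Arguments hplus {s A B} _ _.
Arguments hzero {s} A B.

Declare Scope smc_scope.
Delimit Scope smc_scope with smc.
Open Scope smc_scope.
Notation "f ;; g" := (comp f g) (at level 50, left associativity) : smc_scope.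
Notation "A ⊗ B" := (tob A B) (at level 40, left associativity) : smc_scope.
Notation "f ⊠ g" := (tm f g) (at level 40, left associativity) : smc_scope.
Notation "f +h g" := (hplus f g) (at level 55, left associativity) : smc_scope.

Definition ichg {X : SMCData} (A B C D : ob X) :
  hom ((A ⊗ B) ⊗ (C ⊗ D)) ((A ⊗ C) ⊗ (B ⊗ D)) :=
  asc A B (C ⊗ D) ;; (idm A ⊠ asci B C D) ;; (idm A ⊠ (sym B C ⊠ idm D))
  ;; (idm A ⊠ asc C B D) ;; asci A C (B ⊗ D).

Record IsAddSMC (X : SMCData) : Prop := {
  comp_assoc : forall (A B C D : ob X) (f : hom A B) (g : hom B C) (h : hom C D),
      (f ;; g) ;; h = f ;; (g ;; h);
  comp_id_l : forall (A B : ob X) (f : hom A B), idm A ;; f = f;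
  comp_id_r : forall (A B : ob X) (f : hom A B), f ;; idm B = f;
  tm_id : forall A B : ob X, idm A ⊠ idm B = idm (A ⊗ B);
  tm_comp : forall (A B C D E F : ob X) (f : hom A B) (g : hom C D)
      (h : hom B E) (k : hom D F), (f ⊠ g) ;; (h ⊠ k) = (f ;; h) ⊠ (g ;; k);
  asc_nat : forall (A B C D E F : ob X) (f : hom A B) (g : hom C D) (h : hom E F),
      ((f ⊠ g) ⊠ h) ;; asc B D F = asc A C E ;; (f ⊠ (g ⊠ h));
  asc_asci : forall A B C : ob X, asc A B C ;; asci A B C = idm _;
  asci_asc : forall A B C : ob X, asci A B C ;; asc A B C = idm _;
  lu_nat : forall (A B : ob X) (f : hom A B), (idm unt ⊠ f) ;; lu B = lu A ;; f;
  lu_lui : forall A : ob X, lu A ;; lui A = idm _;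
  lui_lu : forall A : ob X, lui A ;; lu A = idm _;
  ru_nat : forall (A B : ob X) (f : hom A B), (f ⊠ idm unt) ;; ru B = ru A ;; f;
  ru_rui : forall A : ob X, ru A ;; rui A = idm _;
  rui_ru : forall A : ob X, rui A ;; ru A = idm _;
  sym_nat : forall (A B C D : ob X) (f : hom A B) (g : hom C D),
      (f ⊠ g) ;; sym B D = sym A C ;; (g ⊠ f);
  sym_sym : forall A B : ob X, sym A B ;; sym B A = idm _;
  pentagon : forall A B C D : ob X,
      (asc A B C ⊠ idm D) ;; asc A (B ⊗ C) D ;; (idm A ⊠ asc B C D)
      = asc (A ⊗ B) C D ;; asc A B (C ⊗ D);
  triangle : forall A B : ob X,
      asc A unt B ;; (idm A ⊠ lu B) = ru A ⊠ idm B;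
  hexagon : forall A B C : ob X,
      asc A B C ;; sym A (B ⊗ C) ;; asc B C A
      = (sym A B ⊠ idm C) ;; asc B A C ;; (idm B ⊠ sym A C);
  hplus_assoc : forall (A B : ob X) (f g h : hom A B), (f +h g) +h h = f +h (g +h h);
  hplus_comm : forall (A B : ob X) (f g : hom A B), f +h g = g +h f;
  hplus_0 : forall (A B : ob X) (f : hom A B), f +h hzero A B = f;
  comp_plus_l : forall (A B C : ob X) (f f' : hom A B) (g : hom B C),
      (f +h f') ;; g = (f ;; g) +h (f' ;; g);
  comp_plus_r : forall (A B C : ob X) (f : hom A B) (g g' : hom B C),
      f ;; (g +h g') = (f ;; g) +h (f ;; g');
  comp_zero_l : forall (A B C : ob X) (g : hom B C), hzero A B ;; g = hzero A C;
  comp_zero_r : forall (A B C : ob X) (f : hom A B), f ;; hzero B C = hzero A C;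
  tm_plus_l : forall (A B C D : ob X) (f f' : hom A B) (g : hom C D),
      (f +h f') ⊠ g = (f ⊠ g) +h (f' ⊠ g);
  tm_plus_r : forall (A B C D : ob X) (f : hom A B) (g g' : hom C D),
      f ⊠ (g +h g') = (f ⊠ g) +h (f ⊠ g');
  tm_zero_l : forall (A B C D : ob X) (g : hom C D),
      hzero A B ⊠ g = hzero (A ⊗ C) (B ⊗ D);
  tm_zero_r : forall (A B C D : ob X) (f : hom A B),
      f ⊠ hzero C D = hzero (A ⊗ C) (B ⊗ D)
}.

Definition has_negatives (X : SMCData) : Prop :=
  forall (A B : ob X) (f : hom A B), exists g : hom A B, f +h g = hzero A B.

Record MCMData (X : SMCData) := {
  bo : ob X -> ob X;
  bm : forall A B : ob X, hom A B -> hom (bo A) (bo B);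
  dlt : forall A : ob X, hom (bo A) (bo (bo A));
  eps : forall A : ob X, hom (bo A) A;
  mm : forall A B : ob X, hom (bo A ⊗ bo B) (bo (A ⊗ B));
  mK : hom unt (bo unt);
  cDelta : forall A : ob X, hom (bo A) (bo A ⊗ bo A);
  ce : forall A : ob X, hom (bo A) unt
}.

Arguments bo {X} m A.
Arguments bm {X} m {A B} f.
Arguments dlt {X} m A.
Arguments eps {X} m A.
Arguments mm {X} m A B.
Arguments mK {X} m.
Arguments cDelta {X} m A.
Arguments ce {X} m A.

Record IsMCM (X : SMCData) (M : MCMData X) : Prop := {
  bm_id : forall A : ob X, bm M (idm A) = idm (bo M A);
  bm_comp : forall (A B C : ob X) (f : hom A B) (g : hom B C),
      bm M (f ;; g) = bm M f ;; bm M g;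
  dlt_nat : forall (A B : ob X) (f : hom A B),
      bm M f ;; dlt M B = dlt M A ;; bm M (bm M f);
  eps_nat : forall (A B : ob X) (f : hom A B), bm M f ;; eps M B = eps M A ;; f;
  comonad_assoc : forall A : ob X,
      dlt M A ;; dlt M (bo M A) = dlt M A ;; bm M (dlt M A);
  comonad_unit_l : forall A : ob X, dlt M A ;; eps M (bo M A) = idm _;
  comonad_unit_r : forall A : ob X, dlt M A ;; bm M (eps M A) = idm _;
  mm_nat : forall (A B C D : ob X) (f : hom A B) (g : hom C D),
      (bm M f ⊠ bm M g) ;; mm M B D = mm M A C ;; bm M (f ⊠ g);
  mm_assoc : forall A B C : ob X,
      (mm M A B ⊠ idm (bo M C)) ;; mm M (A ⊗ B) C ;; bm M (asc A B C)
      = asc (bo M A) (bo M B) (bo M C) ;; (idm (bo M A) ⊠ mm M B C) ;; mm M A (B ⊗ C);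
  mm_unit_l : forall A : ob X,
      (mK M ⊠ idm (bo M A)) ;; mm M unt A ;; bm M (lu A) = lu (bo M A);
  mm_unit_r : forall A : ob X,
      (idm (bo M A) ⊠ mK M) ;; mm M A unt ;; bm M (ru A) = ru (bo M A);
  mm_sym : forall A B : ob X,
      mm M A B ;; bm M (sym A B) = sym (bo M A) (bo M B) ;; mm M B A;
  dlt_monoidal : forall A B : ob X,
      mm M A B ;; dlt M (A ⊗ B)
      = (dlt M A ⊠ dlt M B) ;; mm M (bo M A) (bo M B) ;; bm M (mm M A B);
  dlt_monoidal_K : mK M ;; dlt M unt = mK M ;; bm M (mK M);
  eps_monoidal : forall A B : ob X, mm M A B ;; eps M (A ⊗ B) = eps M A ⊠ eps M B;
  eps_monoidal_K : mK M ;; eps M unt = idm unt;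
  cDelta_nat : forall (A B : ob X) (f : hom A B),
      bm M f ;; cDelta M B = cDelta M A ;; (bm M f ⊠ bm M f);
  ce_nat : forall (A B : ob X) (f : hom A B), bm M f ;; ce M B = ce M A;
  cDelta_coassoc : forall A : ob X,
      cDelta M A ;; (cDelta M A ⊠ idm (bo M A)) ;; asc _ _ _
      = cDelta M A ;; (idm (bo M A) ⊠ cDelta M A);
  cDelta_counit_l : forall A : ob X,
      cDelta M A ;; (ce M A ⊠ idm (bo M A)) ;; lu _ = idm _;
  cDelta_counit_r : forall A : ob X,
      cDelta M A ;; (idm (bo M A) ⊠ ce M A) ;; ru _ = idm _;
  cDelta_cocomm : forall A : ob X, cDelta M A ;; sym _ _ = cDelta M A;
  dlt_cDelta : forall A : ob X,
      dlt M A ;; cDelta M (bo M A) = cDelta M A ;; (dlt M A ⊠ dlt M A);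
  dlt_ce : forall A : ob X, dlt M A ;; ce M (bo M A) = ce M A;
  cDelta_monoidal : forall A B : ob X,
      mm M A B ;; cDelta M (A ⊗ B)
      = (cDelta M A ⊠ cDelta M B) ;; ichg _ _ _ _ ;; (mm M A B ⊠ mm M A B);
  cDelta_monoidal_K : mK M ;; cDelta M unt = lui unt ;; (mK M ⊠ mK M);
  ce_monoidal : forall A B : ob X,
      mm M A B ;; ce M (A ⊗ B) = (ce M A ⊠ ce M B) ;; lu unt;
  ce_monoidal_K : mK M ;; ce M unt = idm unt;
  cDelta_coalg : forall A : ob X,
      dlt M A ;; bm M (cDelta M A)
      = cDelta M A ;; (dlt M A ⊠ dlt M A) ;; mm M (bo M A) (bo M A);
  ce_coalg : forall A : ob X, dlt M A ;; bm M (ce M A) = ce M A ;; mK M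
}.

Definition nabla {X : SMCData} (M : MCMData X) (A : ob X) :
  hom (bo M A ⊗ bo M A) (bo M A) :=
  (dlt M A ⊠ dlt M A) ;; mm M (bo M A) (bo M A)
  ;; bm M (((eps M A ⊠ ce M A) ;; ru A) +h ((ce M A ⊠ eps M A) ;; lu A)).

Definition uunit {X : SMCData} (M : MCMData X) (A : ob X) : hom unt (bo M A) :=
  mK M ;; bm M (hzero unt A).

Record IsCocommHopfMonoid (X : SMCData) (H : ob X) (nab : hom (H ⊗ H) H)
    (u : hom unt H) (Del : hom H (H ⊗ H)) (e : hom H unt) (S : hom H H) : Prop := {
  hm_assoc : (nab ⊠ idm H) ;; nab = asc H H H ;; (idm H ⊠ nab) ;; nab;
  hm_unit_l : (u ⊠ idm H) ;; nab = lu H;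
  hm_unit_r : (idm H ⊠ u) ;; nab = ru H;
  hm_coassoc : Del ;; (Del ⊠ idm H) ;; asc H H H = Del ;; (idm H ⊠ Del);
  hm_counit_l : Del ;; (e ⊠ idm H) ;; lu H = idm H;
  hm_counit_r : Del ;; (idm H ⊠ e) ;; ru H = idm H;
  hm_bi_mult : nab ;; Del = (Del ⊠ Del) ;; ichg H H H H ;; (nab ⊠ nab);
  hm_bi_unit : u ;; Del = lui unt ;; (u ⊠ u);
  hm_bi_counit : nab ;; e = (e ⊠ e) ;; lu unt;
  hm_bi_unit_counit : u ;; e = idm unt;
  hm_antipode_r : Del ;; (idm H ⊠ S) ;; nab = e ;; u;
  hm_antipode_l : Del ;; (S ⊠ idm H) ;; nab = e ;; u;
  hm_cocomm : Del ;; sym H H = Del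
}.

(* Main.v *)
From Stdlib Require Import ClassicalEpsilon.
Require Import Defs.
Section G.
Variable X : SMCData.
Variable HX : IsAddSMC X.

Lemma cA {A B C D : ob X} (f : hom A B) (g : hom B C) (h : hom C D) : f ;; g ;; h = f ;; (g ;; h).
Proof. apply (comp_assoc HX). Qed.
Ltac nrm := repeat rewrite cA.
Lemma lift2 {A B C D : ob X} {a : hom A B} {b : hom B C} {r : hom A C} :
  a ;; b = r -> forall (k : hom C D), a ;; (b ;; k) = r ;; k.
Proof. intros H k. rewrite <- cA, H. reflexivity. Qed.
Lemma lift3 {A B C D E : ob X} {a : hom A B} {b : hom B C} {c : hom C D} {r : hom A D} :
  a ;; (b ;; c) = r -> forall (k : hom D E), a ;; (b ;; (c ;; k)) = r ;; k.
Proof. intros H k. rewrite <- H. nrm. reflexivity. Qed.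
Lemma lift4 {A B C D E F : ob X} {a : hom A B} {b : hom B C} {c : hom C D} {d : hom D E} {r : hom A E} :
  a ;; (b ;; (c ;; d)) = r -> forall (k : hom E F), a ;; (b ;; (c ;; (d ;; k))) = r ;; k.
Proof. intros H k. rewrite <- H. nrm. reflexivity. Qed.
Lemma lift5 {A B C D E F G : ob X} {a : hom A B} {b : hom B C} {c : hom C D} {d : hom D E} {e : hom E F} {r : hom A F} :
  a ;; (b ;; (c ;; (d ;; e))) = r -> forall (k : hom F G), a ;; (b ;; (c ;; (d ;; (e ;; k)))) = r ;; k.
Proof. intros H k. rewrite <- H. nrm. reflexivity. Qed.
Lemma lift6 {A B C D E F G I : ob X} {a : hom A B} {b : hom B C} {c : hom C D} {d : hom D E} {e : hom E F} {f : hom F G} {r : hom A G} :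
  a ;; (b ;; (c ;; (d ;; (e ;; f)))) = r -> forall (k : hom G I), a ;; (b ;; (c ;; (d ;; (e ;; (f ;; k))))) = r ;; k.
Proof. intros H k. rewrite <- H. nrm. reflexivity. Qed.

Ltac inst H := match type of H with
  | forall _ : _, _ => let h := open_constr:(H _) in inst h
  | _ => constr:(H) end.
Ltac rwlift h := match type of h with
  | _ ;; (_ ;; (_ ;; (_ ;; (_ ;; _)))) = _ => erewrite (lift6 h)
  | _ ;; (_ ;; (_ ;; (_ ;; _))) = _ => erewrite (lift5 h)
  | _ ;; (_ ;; (_ ;; _)) = _ => erewrite (lift4 h)
  | _ ;; (_ ;; _) = _ => erewrite (lift3 h)
  | _ ;; _ = _ => erewrite (lift2 h)
  end.
Ltac rw H := let h := inst H in first [ erewrite h | rwlift h ]; nrm.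
Ltac rwr H := let h := inst H in let h' := constr:(eq_sym h) in first [ erewrite h' | rwlift h' ]; nrm.

Lemma cid_l {A B : ob X} (f : hom A B) : idm A ;; f = f. Proof. apply (comp_id_l HX). Qed.
Lemma cid_r {A B : ob X} (f : hom A B) : f ;; idm B = f. Proof. apply (comp_id_r HX). Qed.
Lemma tmc {A B C D E F : ob X} (f : hom A B) (g : hom C D) (h : hom B E) (k : hom D F) :
  (f ⊠ g) ;; (h ⊠ k) = (f ;; h) ⊠ (g ;; k). Proof. apply (tm_comp HX). Qed.
Lemma tmid (A B : ob X) : idm A ⊠ idm B = idm (A ⊗ B). Proof. apply (tm_id HX). Qed.
Ltac cln := repeat (rewrite ?cid_l, ?cid_r, ?tmid).

Lemma sl_r {A B C D E : ob X} (f : hom A B) (x : hom C D) (y : hom D E) :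
  f ⊠ (x ;; y) = (f ⊠ x) ;; (idm B ⊠ y). Proof. rewrite tmc, cid_r. reflexivity. Qed.
Lemma sl_r' {A B C D E : ob X} (f : hom A B) (x : hom C D) (y : hom D E) :
  f ⊠ (x ;; y) = (idm A ⊠ x) ;; (f ⊠ y). Proof. rewrite tmc, cid_l. reflexivity. Qed.
Lemma sl_l {A B C D E : ob X} (f : hom A B) (x : hom C D) (y : hom D E) :
  (x ;; y) ⊠ f = (x ⊠ f) ;; (y ⊠ idm B). Proof. rewrite tmc, cid_r. reflexivity. Qed.
Lemma sl_l' {A B C D E : ob X} (f : hom A B) (x : hom C D) (y : hom D E) :
  (x ;; y) ⊠ f = (x ⊠ idm A) ;; (y ⊠ f). Proof. rewrite tmc, cid_l. reflexivity. Qed.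

Lemma cancel_r {A B C : ob X} (i : hom B C) (j : hom C B) (H : i ;; j = idm B)
  (f g : hom A B) : f ;; i = g ;; i -> f = g.
Proof. intro E. rewrite <- (cid_r f), <- (cid_r g), <- H, <- !cA, E. reflexivity. Qed.
Lemma cancel_l {A B C : ob X} (i : hom A B) (j : hom B A) (H : j ;; i = idm B)
  (f g : hom B C) : i ;; f = i ;; g -> f = g.
Proof. intro E. rewrite <- (cid_l f), <- (cid_l g), <- H, !cA, E. reflexivity. Qed.

Lemma ru_nat' {A B : ob X} (f : hom A B) : (f ⊠ idm unt) ;; ru B = ru A ;; f.
Proof. apply (ru_nat HX). Qed.
Lemma lu_nat' {A B : ob X} (f : hom A B) : (idm unt ⊠ f) ;; lu B = lu A ;; f.
Proof. apply (lu_nat HX). Qed.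
Lemma faith_r {A B : ob X} (f g : hom A B) : f ⊠ idm unt = g ⊠ idm unt -> f = g.
Proof. intro E. apply (cancel_l (ru A) (rui A) (rui_ru HX A)).
  rewrite <- !ru_nat', E. reflexivity. Qed.
Lemma faith_l {A B : ob X} (f g : hom A B) : idm unt ⊠ f = idm unt ⊠ g -> f = g.
Proof. intro E. apply (cancel_l (lu A) (lui A) (lui_lu HX A)).
  rewrite <- !lu_nat', E. reflexivity. Qed.

Lemma asc_nat' {A B C D E F : ob X} (f : hom A B) (g : hom C D) (h : hom E F) :
  ((f ⊠ g) ⊠ h) ;; asc B D F = asc A C E ;; (f ⊠ (g ⊠ h)). Proof. apply (asc_nat HX). Qed.
Lemma asci_nat {A B C D E F : ob X} (f : hom A B) (g : hom C D) (h : hom E F) :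
  (f ⊠ (g ⊠ h)) ;; asci B D F = asci A C E ;; ((f ⊠ g) ⊠ h).
Proof. apply (cancel_l (asc A C E) (asci A C E) (asci_asc HX A C E)).
  rewrite <- cA, <- asc_nat', cA, (asc_asci HX), cid_r, <- cA, (asc_asci HX), cid_l. reflexivity. Qed.

Lemma pent (A B C D : ob X) :
  (asc A B C ⊠ idm D) ;; (asc A (B ⊗ C) D ;; (idm A ⊠ asc B C D))
      = asc (A ⊗ B) C D ;; asc A B (C ⊗ D).
Proof. rewrite <- cA. apply (pentagon HX). Qed.
Lemma tri (A B : ob X) : asc A unt B ;; (idm A ⊠ lu B) = ru A ⊠ idm B.
Proof. apply (triangle HX). Qed.

Lemma kel_r (A B : ob X) : asc A B unt ;; (idm A ⊠ ru B) = ru (A ⊗ B).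
Proof.
  apply faith_r. apply (cancel_r (asc A B unt) (asci A B unt) (asc_asci HX A B unt)).
  rewrite sl_l. nrm. rw @asc_nat'. rewrite <- (tri B unt).
  rewrite (sl_r' (idm A)). rw pent. rwr @asc_nat'. rewrite tmid. rw tri. reflexivity.
Qed.


Lemma kel_l (A B : ob X) : asc unt A B ;; lu (A ⊗ B) = lu A ⊠ idm B.
Proof.
  apply faith_l.
  apply (cancel_l ((asc unt unt A ⊠ idm B) ;; asc unt (unt ⊗ A) B)
                  (asci unt (unt ⊗ A) B ;; (asci unt unt A ⊠ idm B))).
  { nrm. rw @tmc. rewrite (asci_asc HX), cid_l, tmid, cid_l, (asci_asc HX). reflexivity. }
  nrm. rewrite (sl_r' (idm unt) (asc unt A B) (lu (A ⊗ B))).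
  rw pent. rw tri. rewrite <- (tmid A B). rwr @asc_nat'.
  rwr @asc_nat'. rw @tmc. rewrite tri, cid_l. reflexivity.
Qed.

Lemma lu_ru_unt : lu (@unt X) = ru unt.
Proof.
  apply faith_r. apply (cancel_r (lu unt) (lui unt) (lu_lui HX unt)).
  rewrite <- (tri unt unt). nrm. rw @lu_nat'. rw kel_l. reflexivity.
Qed.

Lemma tnr {A B C D E F : ob X} (a : hom A B) (x : hom C D) (y : hom D E) (y' : hom C F) (x' : hom F E) :
  x ;; y = y' ;; x' -> (a ⊠ x) ;; (idm B ⊠ y) = (idm A ⊠ y') ;; (a ⊠ x').
Proof. intro H. rewrite !tmc, cid_l, cid_r, H. reflexivity. Qed.

Lemma sym_nat' {A B C D : ob X} (f : hom A B) (g : hom C D) :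
  (f ⊠ g) ;; sym B D = sym A C ;; (g ⊠ f). Proof. apply (sym_nat HX). Qed.

Lemma ichg_nat {A1 A2 A3 A4 B1 B2 B3 B4 : ob X} (a : hom A1 B1) (b : hom A2 B2) (c : hom A3 B3) (d : hom A4 B4) :
  ((a ⊠ b) ⊠ (c ⊠ d)) ;; ichg B1 B2 B3 B4 = ichg A1 A2 A3 A4 ;; ((a ⊠ c) ⊠ (b ⊠ d)).
Proof.
  unfold ichg. nrm. rw @asc_nat'.
  rw (tnr a _ _ _ _ (asci_nat b c d)).
  assert (E : ((b ⊠ c) ⊠ d) ;; (sym B2 B3 ⊠ idm B4) = (sym A2 A3 ⊠ idm A4) ;; ((c ⊠ b) ⊠ d)).
  { rewrite !tmc, cid_l, cid_r, sym_nat'. reflexivity. }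
  rw (tnr a _ _ _ _ E).
  rw (tnr a _ _ _ _ (asc_nat' c b d)).
  rw @asci_nat. reflexivity.
Qed.

Lemma lui_nat {A B : ob X} (f : hom A B) : lui A ;; (idm unt ⊠ f) = f ;; lui B.
Proof. apply (cancel_r (lu B) (lui B) (lu_lui HX B)). nrm. rw @lu_nat'.
  rewrite <- cA, (lui_lu HX), (lui_lu HX), cid_l, cid_r. reflexivity. Qed.

          
Lemma pc {A B : ob X} (f g : hom A B) : f +h g = g +h f. Proof. apply (hplus_comm HX). Qed.
Lemma p0 {A B : ob X} (f : hom A B) : f +h hzero A B = f. Proof. apply (hplus_0 HX). Qed.
Lemma p0l {A B : ob X} (f : hom A B) : hzero A B +h f = f. Proof. rewrite pc; apply p0. Qed.
Lemma pa {A B : ob X} (f g h : hom A B) : (f +h g) +h h = f +h (g +h h). Proof. apply (hplus_assoc HX). Qed.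
Lemma cpl {A B C : ob X} (f f' : hom A B) (g : hom B C) : (f +h f') ;; g = (f ;; g) +h (f' ;; g).
Proof. apply (comp_plus_l HX). Qed.
Lemma cpr {A B C : ob X} (f : hom A B) (g g' : hom B C) : f ;; (g +h g') = (f ;; g) +h (f ;; g').
Proof. apply (comp_plus_r HX). Qed.
Lemma czl {A B C : ob X} (g : hom B C) : hzero A B ;; g = hzero A C. Proof. apply (comp_zero_l HX). Qed.
Lemma czr {A B C : ob X} (f : hom A B) : f ;; hzero B C = hzero A C. Proof. apply (comp_zero_r HX). Qed.
Lemma tpl {A B C D : ob X} (f f' : hom A B) (g : hom C D) : (f +h f') ⊠ g = (f ⊠ g) +h (f' ⊠ g).
Proof. apply (tm_plus_l HX). Qed.
Lemma tpr {A B C D : ob X} (f : hom A B) (g g' : hom C D) : f ⊠ (g +h g') = (f ⊠ g) +h (f ⊠ g').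
Proof. apply (tm_plus_r HX). Qed.
Lemma tzl {A B C D : ob X} (g : hom C D) : hzero A B ⊠ g = hzero (A ⊗ C) (B ⊗ D).
Proof. apply (tm_zero_l HX). Qed.
Lemma tzr {A B C D : ob X} (f : hom A B) : f ⊠ hzero C D = hzero (A ⊗ C) (B ⊗ D).
Proof. apply (tm_zero_r HX). Qed.

Lemma neg_unique {A B : ob X} (f x y : hom A B) : f +h x = hzero A B -> f +h y = hzero A B -> x = y.
Proof. intros H1 H2. rewrite <- (p0 x), <- H2, <- pa, (pc x f), H1, p0l. reflexivity. Qed.

                                                  
Lemma C1 {P Q R S : ob X} (x : hom P Q) (y : hom R unt) (z : hom S unt) :
  ((x ⊠ y) ;; ru Q) ⊠ z ;; ru Q = asc P R S ;; (x ⊠ ((y ⊠ z) ;; lu unt) ;; ru Q).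
Proof. rewrite sl_l, sl_r. nrm. rwr @asc_nat'. rw tri. reflexivity. Qed.
Lemma C2 {P Q R S : ob X} (x : hom P Q) (y : hom R unt) (z : hom S unt) :
  ((y ⊠ x) ;; lu Q) ⊠ z ;; ru Q = asc R P S ;; (y ⊠ ((x ⊠ z) ;; ru Q) ;; lu Q).
Proof. rewrite sl_l, sl_r. nrm. rwr @asc_nat'. rw kel_r. rwr @ru_nat'. reflexivity. Qed.
Lemma C3 {P Q R S : ob X} (x : hom P Q) (y : hom R unt) (z : hom S unt) :
  ((y ⊠ z) ;; lu unt) ⊠ x ;; lu Q = asc R S P ;; (y ⊠ ((z ⊠ x) ;; lu Q) ;; lu Q).
Proof. rewrite sl_l, sl_r. nrm. rwr @asc_nat'. rw tri. rewrite lu_ru_unt. reflexivity. Qed.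

Lemma ru_split {A B C : ob X} (f : hom A B) (g : hom C unt) : (f ⊠ g) ;; ru B = (idm A ⊠ g) ;; (ru A ;; f).
Proof. rewrite <- ru_nat', <- cA, tmc, cid_l, cid_r. reflexivity. Qed.
Lemma lu_split {A B C : ob X} (f : hom A B) (g : hom C unt) : (g ⊠ f) ;; lu B = (g ⊠ idm A) ;; (lu A ;; f).
Proof. rewrite <- lu_nat', <- cA, tmc, cid_l, cid_r. reflexivity. Qed.


Variable M : MCMData X.
Variable HM : IsMCM M.

Notation "! A" := (bo M A) (at level 1, format "! A") : smc_scope.

Lemma bmc {A B C : ob X} (f : hom A B) (g : hom B C) : bm M (f ;; g) = bm M f ;; bm M g.
Proof. apply (bm_comp HM). Qed.
Lemma bmid (A : ob X) : bm M (idm A) = idm (!A). Proof. apply (bm_id HM). Qed.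
Lemma dltn {A B : ob X} (f : hom A B) : bm M f ;; dlt M B = dlt M A ;; bm M (bm M f).
Proof. apply (dlt_nat HM). Qed.
Lemma epsn {A B : ob X} (f : hom A B) : bm M f ;; eps M B = eps M A ;; f.
Proof. apply (eps_nat HM). Qed.
Lemma cna (A : ob X) : dlt M A ;; dlt M (!A) = dlt M A ;; bm M (dlt M A). Proof. apply (comonad_assoc HM). Qed.
Lemma cnl (A : ob X) : dlt M A ;; eps M (!A) = idm _. Proof. apply (comonad_unit_l HM). Qed.
Lemma cnr (A : ob X) : dlt M A ;; bm M (eps M A) = idm _. Proof. apply (comonad_unit_r HM). Qed.
Lemma mmn {A B C D : ob X} (f : hom A B) (g : hom C D) :
  (bm M f ⊠ bm M g) ;; mm M B D = mm M A C ;; bm M (f ⊠ g). Proof. apply (mm_nat HM). Qed.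
Lemma mma (A B C : ob X) :
  (mm M A B ⊠ idm (!C)) ;; (mm M (A ⊗ B) C ;; bm M (asc A B C))
  = asc (!A) (!B) (!C) ;; ((idm (!A) ⊠ mm M B C) ;; mm M A (B ⊗ C)).
Proof. rewrite <- !cA. apply (mm_assoc HM). Qed.
Lemma mmul (A : ob X) : (mK M ⊠ idm (!A)) ;; (mm M unt A ;; bm M (lu A)) = lu (!A).
Proof. rewrite <- !cA. apply (mm_unit_l HM). Qed.
Lemma mmur (A : ob X) : (idm (!A) ⊠ mK M) ;; (mm M A unt ;; bm M (ru A)) = ru (!A).
Proof. rewrite <- !cA. apply (mm_unit_r HM). Qed.
Lemma dltm (A B : ob X) : mm M A B ;; dlt M (A ⊗ B)
      = (dlt M A ⊠ dlt M B) ;; (mm M (!A) (!B) ;; bm M (mm M A B)).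
Proof. rewrite <- !cA. apply (dlt_monoidal HM). Qed.
Lemma dltK : mK M ;; dlt M unt = mK M ;; bm M (mK M). Proof. apply (dlt_monoidal_K HM). Qed.
Lemma epsm (A B : ob X) : mm M A B ;; eps M (A ⊗ B) = eps M A ⊠ eps M B. Proof. apply (eps_monoidal HM). Qed.
Lemma epsK : mK M ;; eps M unt = idm unt. Proof. apply (eps_monoidal_K HM). Qed.
Lemma cDn {A B : ob X} (f : hom A B) : bm M f ;; cDelta M B = cDelta M A ;; (bm M f ⊠ bm M f).
Proof. apply (cDelta_nat HM). Qed.
Lemma cen {A B : ob X} (f : hom A B) : bm M f ;; ce M B = ce M A. Proof. apply (ce_nat HM). Qed.
Lemma cDcl (A : ob X) : cDelta M A ;; ((ce M A ⊠ idm (!A)) ;; lu _) = idm _.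
Proof. rewrite <- cA. apply (cDelta_counit_l HM). Qed.
Lemma cDcr (A : ob X) : cDelta M A ;; ((idm (!A) ⊠ ce M A) ;; ru _) = idm _.
Proof. rewrite <- cA. apply (cDelta_counit_r HM). Qed.
Lemma dltcD (A : ob X) : dlt M A ;; cDelta M (!A) = cDelta M A ;; (dlt M A ⊠ dlt M A).
Proof. apply (dlt_cDelta HM). Qed.
Lemma dltce (A : ob X) : dlt M A ;; ce M (!A) = ce M A. Proof. apply (dlt_ce HM). Qed.
Lemma cDm (A B : ob X) : mm M A B ;; cDelta M (A ⊗ B)
      = (cDelta M A ⊠ cDelta M B) ;; (ichg _ _ _ _ ;; (mm M A B ⊠ mm M A B)).
Proof. rewrite <- !cA. apply (cDelta_monoidal HM). Qed.
Lemma cDK : mK M ;; cDelta M unt = lui unt ;; (mK M ⊠ mK M). Proof. apply (cDelta_monoidal_K HM). Qed.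
Lemma cem (A B : ob X) : mm M A B ;; ce M (A ⊗ B) = (ce M A ⊠ ce M B) ;; lu unt. Proof. apply (ce_monoidal HM). Qed.
Lemma ceK : mK M ;; ce M unt = idm unt. Proof. apply (ce_monoidal_K HM). Qed.
Lemma cDcoalg (A : ob X) : dlt M A ;; bm M (cDelta M A)
      = cDelta M A ;; ((dlt M A ⊠ dlt M A) ;; mm M (!A) (!A)).
Proof. rewrite <- !cA. apply (cDelta_coalg HM). Qed.
Lemma cecoalg (A : ob X) : dlt M A ;; bm M (ce M A) = ce M A ;; mK M. Proof. apply (ce_coalg HM). Qed.

                         
Lemma coalg_uniq {Y C : ob X} (g : hom Y (!Y)) (p q : hom Y (!C)) :
  p ;; dlt M C = g ;; bm M p -> q ;; dlt M C = g ;; bm M q -> p ;; eps M C = q ;; eps M C -> p = q.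
Proof.
  intros Hp Hq He.
  rewrite <- (cid_r p), <- (cid_r q), <- (cnr C), <- !cA, Hp, Hq, !cA, <- !bmc, He. reflexivity.
Qed.
Lemma coalg_lift {Y C : ob X} (g : hom Y (!Y)) (k : hom Y C) :
  g ;; dlt M Y = g ;; bm M g -> (g ;; bm M k) ;; dlt M C = g ;; bm M (g ;; bm M k).
Proof. intro H. nrm. rw @dltn. rw H. rewrite !bmc. reflexivity. Qed.

Definition a2 (A B : ob X) : hom (!A ⊗ !B) (!(!A ⊗ !B)) := (dlt M A ⊠ dlt M B) ;; mm M (!A) (!B).
Definition hh (A : ob X) : hom (!A ⊗ !A) A :=
  ((eps M A ⊠ ce M A) ;; ru A) +h ((ce M A ⊠ eps M A) ;; lu A).

Lemma nabla_eq (A : ob X) : nabla M A = a2 A A ;; bm M (hh A).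
Proof. reflexivity. Qed.

Lemma a2_coalg (A B : ob X) : a2 A B ;; dlt M _ = a2 A B ;; bm M (a2 A B).
Proof.
  unfold a2. rewrite bmc. nrm. rw dltm. rw @tmc. rewrite !cna. rwr @tmc. rw @mmn. reflexivity.
Qed.


Lemma nab_eps (A : ob X) : nabla M A ;; eps M A = hh A.
Proof. rewrite nabla_eq. unfold a2. nrm. rw @epsn. rw epsm. rw @tmc. rewrite !cnl, tmid, cid_l. reflexivity. Qed.
Lemma nab_ce (A : ob X) : nabla M A ;; ce M A = (ce M A ⊠ ce M A) ;; lu unt.
Proof. rewrite nabla_eq. unfold a2. nrm. rewrite cen. rw cem. rw @tmc. rewrite !dltce. reflexivity. Qed.
Lemma nab_dlt (A : ob X) : nabla M A ;; dlt M A = a2 A A ;; bm M (nabla M A).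
Proof. rewrite nabla_eq. apply coalg_lift, a2_coalg. Qed.
Lemma u_dlt (A : ob X) : uunit M A ;; dlt M A = mK M ;; bm M (uunit M A).
Proof. unfold uunit. nrm. rw @dltn. rw dltK. rewrite bmc. reflexivity. Qed.
Lemma u_eps (A : ob X) : uunit M A ;; eps M A = hzero unt A.
Proof. unfold uunit. nrm. rewrite epsn, !czr. reflexivity. Qed.
Lemma u_ce (A : ob X) : uunit M A ;; ce M A = idm unt.
Proof. unfold uunit. nrm. rewrite cen, ceK. reflexivity. Qed.

Lemma hm_assoc' (A : ob X) :
  (nabla M A ⊠ idm (!A)) ;; nabla M A = asc (!A) (!A) (!A) ;; (idm (!A) ⊠ nabla M A) ;; nabla M A.
Proof.
  nrm.
  apply (coalg_uniq ((a2 A A ⊠ dlt M A) ;; mm M _ _)).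
  - nrm. rw nab_dlt. rewrite (bmc (nabla M A ⊠ idm _)).
    unfold a2 at 1. nrm. rw @tmc. rewrite nab_dlt, cid_l.
    rwr @mmn. rewrite bmid. rw @tmc. rewrite cid_r. reflexivity.
  - nrm. rw nab_dlt. rewrite !bmc. unfold a2. nrm.
    rw @tmc. rewrite cid_l, nab_dlt. unfold a2. nrm.
    rewrite sl_l. nrm. rw mma. rw @asc_nat'. rwr @mmn. rewrite bmid.
    rw @tmc. rw @tmc. rewrite !cid_r. nrm. reflexivity.
  - nrm. rewrite nab_eps. unfold hh. rewrite !cpr. repeat rw @tmc. rewrite !cid_l, nab_eps, !nab_ce.
    unfold hh. rewrite tpl, tpr, !cpl, !cpr.
    rewrite C1, C2, C3, pa. reflexivity.
Qed.

Lemma pn {A B : ob X} (f : hom A B) (n : hom B B) : f +h (f ;; n) = f ;; (idm B +h n).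
Proof. rewrite cpr, cid_r. reflexivity. Qed.

Lemma hm_unit_l' (A : ob X) : (uunit M A ⊠ idm (!A)) ;; nabla M A = lu (!A).
Proof.
  apply (coalg_uniq ((mK M ⊠ dlt M A) ;; mm M _ _)).
  - nrm. rw nab_dlt. rewrite bmc. unfold a2. nrm. rw @tmc. rewrite u_dlt, cid_l.
    rwr @mmn. rewrite bmid. rw @tmc. rewrite cid_r. reflexivity.
  - rwr @lu_nat'. rewrite <- (mmul (!A)). nrm. rw @tmc. rewrite cid_l, cid_r. reflexivity.
  - nrm. rewrite nab_eps. unfold hh. rewrite cpr. repeat rw @tmc. rewrite u_eps, u_ce, cid_l.
    rewrite tzl, czl, p0l, lu_nat', ?cid_l. reflexivity.
Qed.

Lemma hm_unit_r' (A : ob X) : (idm (!A) ⊠ uunit M A) ;; nabla M A = ru (!A).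
Proof.
  apply (coalg_uniq ((dlt M A ⊠ mK M) ;; mm M _ _)).
  - nrm. rw nab_dlt. rewrite bmc. unfold a2. nrm. rw @tmc. rewrite u_dlt, cid_l.
    rwr @mmn. rewrite bmid. rw @tmc. rewrite cid_r. reflexivity.
  - rwr @ru_nat'. rewrite <- (mmur (!A)). nrm. rw @tmc. rewrite cid_l, cid_r. reflexivity.
  - nrm. rewrite nab_eps. unfold hh. rewrite cpr. repeat rw @tmc. rewrite u_eps, u_ce, cid_l.
    rewrite tzr, czl, p0, ru_nat', ?cid_l. reflexivity.
Qed.

Lemma hm_bi_mult' (A : ob X) : nabla M A ;; cDelta M A
  = (cDelta M A ⊠ cDelta M A) ;; ichg _ _ _ _ ;; (nabla M A ⊠ nabla M A).
Proof.
  unfold nabla. nrm. rewrite cDn. rw cDm. rw (tmc (dlt M A) (dlt M A) (cDelta M (!A)) (cDelta M (!A))). rewrite !dltcD. rwr @tmc. rw @ichg_nat.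
  rw @tmc. rw @tmc. reflexivity.
Qed.

Lemma hm_bi_unit' (A : ob X) : uunit M A ;; cDelta M A = lui unt ;; (uunit M A ⊠ uunit M A).
Proof. unfold uunit. nrm. rewrite cDn. rw cDK. rw @tmc. reflexivity. Qed.

Lemma hm_bi_counit' (A : ob X) : nabla M A ;; ce M A = (ce M A ⊠ ce M A) ;; lu unt.
Proof. apply nab_ce. Qed.

Lemma hm_antipode_r' (A : ob X) (n : hom A A) (Hn : idm A +h n = hzero A A) :
  cDelta M A ;; (idm (!A) ⊠ bm M n) ;; nabla M A = ce M A ;; uunit M A.
Proof.
  apply (coalg_uniq (dlt M A)).
  - nrm. rw nab_dlt. unfold a2. nrm. rw @tmc. rewrite cid_l, dltn.
    rewrite sl_r. nrm. rewrite <- (bmid (!A)). rw @mmn.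
    rwr cDcoalg. rewrite !bmc. reflexivity.
  - nrm. rw u_dlt. rwr cecoalg. rewrite bmc. reflexivity.
  - nrm. rewrite nab_eps, u_eps, czr. unfold hh. rewrite !cpr. repeat rw @tmc.
    rewrite !cid_l, cen, epsn. rewrite ru_split, lu_split. nrm. rw cDcr. rw cDcl.
    rewrite !cid_l, pn, Hn, czr. reflexivity.
Qed.

Lemma hm_antipode_l' (A : ob X) (n : hom A A) (Hn : idm A +h n = hzero A A) :
  cDelta M A ;; (bm M n ⊠ idm (!A)) ;; nabla M A = ce M A ;; uunit M A.
Proof.
  apply (coalg_uniq (dlt M A)).
  - nrm. rw nab_dlt. unfold a2. nrm. rw @tmc. rewrite cid_l, dltn.
    rewrite sl_l. nrm. rewrite <- (bmid (!A)). rw @mmn.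
    rwr cDcoalg. rewrite !bmc. reflexivity.
  - nrm. rw u_dlt. rwr cecoalg. rewrite bmc. reflexivity.
  - nrm. rewrite nab_eps, u_eps, czr. unfold hh. rewrite !cpr. repeat rw @tmc.
    rewrite !cid_l, cen, epsn. rewrite ru_split, lu_split. nrm. rw cDcr. rw cDcl.
    rewrite !cid_l, pc, pn, Hn, czr. reflexivity.
Qed.

Lemma neg_from_unit (n : hom (@unt X) unt) (Hn : idm unt +h n = hzero unt unt) : has_negatives X.
Proof.
  intros A B f. exists (rui A ;; ((f ⊠ n) ;; ru B)).
  assert (Ef : f = rui A ;; ((f ⊠ idm unt) ;; ru B)).
  { rewrite ru_nat', <- cA, (rui_ru HX), cid_l. reflexivity. }
  transitivity (rui A ;; ((f ⊠ idm unt) ;; ru B) +h rui A ;; ((f ⊠ n) ;; ru B)).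
  { rewrite <- Ef. reflexivity. }
  rewrite <- cpr, <- cpl, <- tpr, Hn, tzr, czl, czr. reflexivity.
Qed.

Lemma forward (S : forall A : ob X, hom (!A) (!A))
  (H : IsCocommHopfMonoid (nabla M unt) (uunit M unt) (cDelta M unt) (ce M unt) (S unt)) :
  has_negatives X.
Proof.
  assert (Hp : cDelta M unt ;; ((idm _ ⊠ S unt) ;; nabla M unt) = ce M unt ;; uunit M unt).
  { rewrite <- cA. exact (hm_antipode_r H). }
  assert (Hc : mK M ;; (S unt ;; ce M unt) = idm unt).
  { transitivity (mK M ;; (cDelta M unt ;; ((idm _ ⊠ S unt) ;; (nabla M unt ;; ce M unt)))).
    - rewrite nab_ce. rw cDK. repeat rw @tmc. rewrite !cid_l, ceK.
      symmetry. rw @lu_nat'. rewrite <- cA, (lui_lu HX), cid_l. reflexivity.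
    - rw Hp. rewrite u_ce, cid_r, ceK. reflexivity. }
  assert (Hn0 : lui unt ;; ru unt +h mK M ;; (S unt ;; eps M unt) = hzero unt unt).
  { transitivity (mK M ;; (cDelta M unt ;; ((idm _ ⊠ S unt) ;; (nabla M unt ;; eps M unt)))).
    - symmetry. rewrite nab_eps. rw cDK. unfold hh. rewrite !cpr. repeat rw @tmc.
      rewrite !cid_l, epsK, ceK, Hc, tmid, cid_l. rw @lu_nat'.
      rewrite <- cA, (lui_lu HX), cid_l. reflexivity.
    - rw Hp. rewrite u_eps, !czr. reflexivity. }
  apply (neg_from_unit (mK M ;; (S unt ;; eps M unt) ;; (rui unt ;; lu unt))).
  transitivity ((lui unt ;; ru unt +h mK M ;; (S unt ;; eps M unt)) ;; (rui unt ;; lu unt)).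
  - rewrite cpl. nrm. rw (ru_rui HX). rewrite cid_l, (lui_lu HX). reflexivity.
  - rewrite Hn0, czl. reflexivity.
Qed.

Lemma backward (Hneg : has_negatives X) :
  exists S : forall A : ob X, hom (bo M A) (bo M A),
      (forall (A B : ob X) (f : hom A B), bm M f ;; S B = S A ;; bm M f) /\
      (forall A : ob X,
          IsCocommHopfMonoid (nabla M A) (uunit M A) (cDelta M A) (ce M A) (S A)).
Proof.
  pose (nn := fun A : ob X => proj1_sig (constructive_indefinite_description _ (Hneg A A (idm A)))).
  assert (Hnn : forall A, idm A +h nn A = hzero A A).
  { intro A. unfold nn. destruct (constructive_indefinite_description _ _) as [g Hg]. exact Hg. }
  exists (fun A => bm M (nn A)). split.
  - intros A B f. rewrite <- !bmc. f_equal. apply (neg_unique f).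
    + rewrite pn, Hnn, czr. reflexivity.
    + rewrite <- (cid_l f) at 1. rewrite <- cpl, Hnn, czl. reflexivity.
  - intro A. constructor.
    + apply hm_assoc'.
    + apply hm_unit_l'.
    + apply hm_unit_r'.
    + apply (cDelta_coassoc HM).
    + apply (cDelta_counit_l HM).
    + apply (cDelta_counit_r HM).
    + apply hm_bi_mult'.
    + apply hm_bi_unit'.
    + apply hm_bi_counit'.
    + apply u_ce.
    + apply hm_antipode_r'. apply Hnn.
    + apply hm_antipode_l'. apply Hnn.
    + apply (cDelta_cocomm HM).
Qed.
End G.

Theorem proposition7p9 (X : SMCData) (HX : IsAddSMC X)
    (M : MCMData X) (HM : IsMCM M) :
  (exists S : forall A : ob X, hom (bo M A) (bo M A),
      (forall (A B : ob X) (f : hom A B), bm M f ;; S B = S A ;; bm M f) /\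
      (forall A : ob X,
          IsCocommHopfMonoid (nabla M A) (uunit M A) (cDelta M A) (ce M A) (S A)))
  <-> has_negatives X.
Proof.
  split.
  - intros [S [_ HS]]. eapply forward; [exact HX | exact HM | exact (HS unt)].
  - intro Hn. eapply backward; [exact HX | exact HM | exact Hn].
Qed.
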